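(* Let $(V,\star,\alpha,1)$ be a unital hom-associative algebra of type $I_3$. Then it is also (a) of type $I_2$, (b) of type $II_2$, and (c) of type $II_3$.
   Context: Let $k$ be a commutative ring. A unital hom-associative algebra is a tuple $(V,\star,\alpha,1)$ where $V$ is a $k$-module, $\star:V\times V\to V$ is $k$-bilinear, $\alpha:V\to V$ is $k$-linear, and $1\in V$ satisfies $1\star x=x\star 1=x$ for all $x\in V$. It is of type $T$ if the identity for $T$ holds for all $x,y,z\in V$: $I_2$: $x\star(\alpha(y)\star z)=(x\star\alpha(y))\star z$; $I_3$: $x\star(y\star\alpha(z))=(\alpha(x)\star y)\star z$; $II_2$: $\alpha(x)\star(y\star\alpha(z))=(\alpha(x)\star y)\star\alpha(z)$; $II_3$: $\alpha(x)\star(\alpha(y)\star z)=(x\star\alpha(y))\star\alpha(z)$. *)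

(* Defs.v *)
From HB Require Import structures.
From mathcomp Require Import all_boot all_order all_algebra.
Set Implicit Arguments. Unset Strict Implicit. Unset Printing Implicit Defensive.
Import GRing.Theory.
Local Open Scope ring_scope.

Definition bilinear_op (k : comPzRingType) (V : lmodType k) (star : V -> V -> V) : Prop :=
  (forall (a : k) (x y z : V), star (a *: x + y) z = a *: star x z + star y z) /\
  (forall (a : k) (x y z : V), star z (a *: x + y) = a *: star z x + star z y).

Definition linear_map (k : comPzRingType) (V : lmodType k) (alpha : V -> V) : Prop :=
  forall (a : k) (x y : V), alpha (a *: x + y) = a *: alpha x + alpha y.

Definition unital_hom_alg (k : comPzRingType) (V : lmodType k)
  (star : V -> V -> V) (alpha : V -> V) (one : V) : Prop :=
  [/\ bilinear_op star, linear_map alpha &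
      forall x : V, star one x = x /\ star x one = x].

Definition type_I2 (k : comPzRingType) (V : lmodType k) (star : V -> V -> V) (alpha : V -> V) :=
  forall x y z : V, star x (star (alpha y) z) = star (star x (alpha y)) z.
Definition type_I3 (k : comPzRingType) (V : lmodType k) (star : V -> V -> V) (alpha : V -> V) :=
  forall x y z : V, star x (star y (alpha z)) = star (star (alpha x) y) z.
Definition type_II2 (k : comPzRingType) (V : lmodType k) (star : V -> V -> V) (alpha : V -> V) :=
  forall x y z : V, star (alpha x) (star y (alpha z)) = star (star (alpha x) y) (alpha z).
Definition type_II3 (k : comPzRingType) (V : lmodType k) (star : V -> V -> V) (alpha : V -> V) :=
  forall x y z : V, star (alpha x) (star (alpha y) z) = star (star x (alpha y)) (alpha z).

(* Main.v *)
Require Import Defs.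
From HB Require Import structures.
From mathcomp Require Import all_boot all_order all_algebra.

Theorem proposition2p6 (k : comPzRingType) (V : lmodType k)
  (star : V -> V -> V) (alpha : V -> V) (one : V) :
  unital_hom_alg star alpha one -> type_I3 star alpha ->
  type_I2 star alpha /\ type_II2 star alpha /\ type_II3 star alpha.
Proof.
move=> [_ _ U] I3.
have U1 x : star one x = x by case: (U x).
have U2 x : star x one = x by case: (U x).
have S a b : star a (alpha b) = star (alpha a) b.
  by have := I3 a one b; rewrite U1 U2.
have Al w : alpha w = star (alpha one) w by rewrite -S U1.
have A x y : alpha (star (alpha x) y) = star (alpha (alpha x)) y.
  rewrite (Al (star (alpha x) y)) -(S x y) I3; congr (star _ y).
  by rewrite (Al (alpha x)) S.
have I2 : type_I2 star alpha.
  by move=> x y z; rewrite -(S y z) I3 (S x y).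
split=> //; split.
- by move=> x y z; rewrite I3 (S (star (alpha x) y) z) A.
- by move=> x y z; rewrite I2 (S (star x (alpha y)) z) (S x y) A (S (alpha x) y).
Qed.
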